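(* Let $\zeta\in(0,\infty)$ and $(h,w)\in\boldsymbol\Sigma([0,\zeta])$. Then the snake metric $d_{h,w}$ is a continuous pseudo-metric on $[0,\zeta]$ satisfying the four points inequality: for all $s_1,s_2,s_3,s_4\in[0,\zeta]$, $$d_{h,w}(s_1,s_2)+d_{h,w}(s_3,s_4)\le\max\big(d_{h,w}(s_1,s_3)+d_{h,w}(s_2,s_4),\,d_{h,w}(s_1,s_4)+d_{h,w}(s_2,s_3)\big).$$
   Context: $\mathbf C_0$: continuous functions $[0,\infty)\to\mathbb R$ with the topology of uniform convergence on compacts. A snake $(h,w)\in\boldsymbol\Sigma([0,\zeta])$: $h:[0,\zeta]\to[0,\infty)$ continuous, $h(0)=h(\zeta)=0$, $s\mapsto w_s\in\mathbf C_0$ continuous, $w_s(r)=w_s(h(s))=:\widehat w_s$ for $r\ge h(s)$, and $w_{s_1}(r)=w_{s_2}(r)$ for $r\in[0,m_h(s_1,s_2)]$ where $m_h(s_1,s_2)=\min_{[s_1\wedge s_2,s_1\vee s_2]}h$. Snake metric: $M_{h,w}(s_1,s_2)=\min\big(\min_{r\in[m_h(s_1,s_2),h(s_1)]}w_{s_1}(r),\min_{r\in[m_h(s_1,s_2),h(s_2)]}w_{s_2}(r)\big)$, $d_{h,w}(s_1,s_2)=\widehat w_{s_1}+\widehat w_{s_2}-2M_{h,w}(s_1,s_2)$. *)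

(* Defs.v *)
From HB Require Import structures.
From mathcomp Require Import all_boot all_order all_algebra.
From mathcomp Require Import all_classical all_reals all_analysis.
Set Implicit Arguments. Unset Strict Implicit. Unset Printing Implicit Defensive.
Import Order.TTheory GRing.Theory Num.Theory.
Import numFieldNormedType.Exports.
Local Open Scope classical_set_scope.
Local Open Scope ring_scope.

Section Snake.
Variable R : realType.

(* m_h(s1,s2) = min of h over [s1 /\ s2, s1 \/ s2] (inf = min since h is continuous) *)
Definition snake_mh (h : R -> R) (s1 s2 : R) : R :=
  inf [set h t | t in `[Num.min s1 s2, Num.max s1 s2]].

Definition snake_M (h : R -> R) (w : R -> R -> R) (s1 s2 : R) : R :=
  Num.min (inf [set w s1 r | r in `[snake_mh h s1 s2, h s1]])
          (inf [set w s2 r | r in `[snake_mh h s1 s2, h s2]]).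

Definition snake_d (h : R -> R) (w : R -> R -> R) (s1 s2 : R) : R :=
  w s1 (h s1) + w s2 (h s2) - 2 * snake_M h w s1 s2.

(* (h,w) in Sigma([0,zeta]); w s : R -> R represents w_s in C_0 (only its values
   on [0,oo) matter). *)
Definition is_snake (zeta : R) (h : R -> R) (w : R -> R -> R) : Prop :=
  [/\ {within `[0, zeta], continuous h},
      (forall s, s \in `[0, zeta] -> 0 <= h s),
      h 0 = 0 /\ h zeta = 0 &
    [/\
      (forall s, s \in `[0, zeta] -> {within [set x : R | 0 <= x], continuous (w s)}),
      (* s |-> w_s continuous for uniform convergence on compacts of [0,oo) *)
      (forall s, s \in `[0, zeta] -> forall K e : R, 0 < e ->
         exists2 d : R, 0 < d & forall s', s' \in `[0, zeta] -> `|s' - s| < d ->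
           forall r, 0 <= r <= K -> `|w s' r - w s r| < e),
      (forall s, s \in `[0, zeta] -> forall r, h s <= r -> w s r = w s (h s))
    & (forall s1 s2, s1 \in `[0, zeta] -> s2 \in `[0, zeta] ->
         forall r, 0 <= r <= snake_mh h s1 s2 -> w s1 r = w s2 r)]].

End Snake.

(* Main.v *)
Require Import Defs.
From HB Require Import structures.
From mathcomp Require Import all_boot all_order all_algebra.
From mathcomp Require Import all_classical all_reals all_analysis.
From mathcomp Require Import lra.
Import Order.TTheory GRing.Theory Num.Theory.
Import numFieldNormedType.Exports.
Local Open Scope classical_set_scope.
Local Open Scope ring_scope.

Lemma minR {R : realType} (x y : R) :
  (Num.min x y = x /\ x <= y) \/ (Num.min x y = y /\ y <= x).
Proof.
case: (leP x y) => H; [left|right]; split => //; exact: ltW.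
Qed.

Lemma maxR {R : realType} (x y : R) :
  (Num.max x y = y /\ x <= y) \/ (Num.max x y = x /\ y <= x).
Proof.
case: (leP x y) => H; [left|right]; split => //; exact: ltW.
Qed.

Lemma absP {R : realType} (x d : R) : `|x| < d <-> (- d < x /\ x < d).
Proof. by rewrite ltr_norml; split => [/andP[]|[-> ->]]. Qed.

Lemma inf_attained {R : realType} {f : R -> R} {a b : R} :
  a <= b -> {within `[a, b], continuous f} ->
  exists2 c, c \in `[a, b] &
    inf [set f r | r in `[a, b]] = f c /\ forall t, t \in `[a, b] -> f c <= f t.
Proof.
move=> ab cf; have [c cab Hc] := EVT_min ab cf.
exists c => //; split => //.
apply/eqP; rewrite eq_le; apply/andP; split.
  apply: (ge_inf (E := [set f r | r in `[a, b]])).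
    by exists (f c) => _ [t tab <-]; apply: Hc.
  by exists c.
apply: lb_le_inf; first by exists (f c), c.
by move=> _ [t tab <-]; apply: Hc.
Qed.

Lemma within_epsdelta (R : realType) (A : set R) (f : R -> R) x :
  {within A, continuous f} -> A x ->
  forall e : R, 0 < e -> exists2 d : R, 0 < d & forall y, A y -> `|y - x| < d -> `|f y - f x| < e.
Proof.
move=> /subspace_continuousP cf Ax e e0.
have := cf x Ax. move=> /cvgrPdist_lt /(_ e e0).
rewrite near_withinE /= => -[d d0 H].
exists d => // y Ay yx.
rewrite distrC; apply: (H y) => //=.
by rewrite distrC.
Qed.

Lemma prod_epsdelta (R : realType) (P : set (R * R)) (f : R * R -> R) :
  (forall x, P x -> forall e : R, 0 < e -> exists2 d : R, 0 < d & forall y, P y ->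
     `|y.1 - x.1| < d -> `|y.2 - x.2| < d -> `|f y - f x| < e) ->
  {within P, continuous f}.
Proof.
move=> H; apply/subspace_continuousP => x Px.
apply/cvgrPdist_lt => e e0.
have [d d0 Hd] := H x Px e e0.
rewrite near_withinE; apply/nbhs_ballP; exists d => //= y [/= b1 b2] Py.
rewrite distrC; apply: Hd => //.
  by move: b1; rewrite /ball /= distrC.
by move: b2; rewrite /ball /= distrC.
Qed.

Definition cts {R : realType} (D : set (R * R)) (f : R * R -> R) (p0 : R * R) :=
  forall e : R, 0 < e -> exists2 d : R, 0 < d & forall p, D p ->
    `|p.1 - p0.1| < d -> `|p.2 - p0.2| < d -> `|f p - f p0| < e.

Lemma cts_fst (R : realType) (D : set (R * R)) (p0 : R * R) : cts D (fun p => p.1) p0.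
Proof. by move=> e e0; exists e. Qed.

Lemma cts_snd (R : realType) (D : set (R * R)) (p0 : R * R) : cts D (fun p => p.2) p0.
Proof. by move=> e e0; exists e. Qed.

Lemma cts_ext (R : realType) (D : set (R * R)) (f g : R * R -> R) p0 :
  (forall p, f p = g p) -> cts D f p0 -> cts D g p0.
Proof. by move=> fg cf e e0; have [d d0 H] := cf e e0; exists d => // p Dp; rewrite -!fg; apply: H. Qed.

Lemma cts_bin (R : realType) (D : set (R * R)) (f g : R * R -> R) (op : R -> R -> R) p0 :
  (forall a b c d (e : R), 0 < e -> `|a - c| < e -> `|b - d| < e -> `|op a b - op c d| < e + e) ->
  cts D f p0 -> cts D g p0 -> cts D (fun p => op (f p) (g p)) p0.
Proof.
move=> Hop cf cg e e0.
have e20 : 0 < e / 2 by rewrite divr_gt0.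
have [d1 d10 H1] := cf _ e20; have [d2 d20 H2] := cg _ e20.
exists (Num.min d1 d2); first by rewrite lt_min d10 d20.
move=> p Dp l1 l2.
have [m1 m2] : Num.min d1 d2 <= d1 /\ Num.min d1 d2 <= d2 by rewrite !ge_min !lexx orbT.
have := Hop (f p) (g p) (f p0) (g p0) (e / 2) e20.
rewrite -splitr; apply.
  by apply: H1 => //; apply: lt_le_trans m1.
by apply: H2 => //; apply: lt_le_trans m2.
Qed.

Lemma op_add (R : realType) (a b c d e : R) : 0 < e ->
  `|a - c| < e -> `|b - d| < e -> `|(a + b) - (c + d)| < e + e.
Proof.
move=> _ /absP[? ?] /absP[? ?]; apply/absP; split; lra.
Qed.

Lemma op_sub (R : realType) (a b c d e : R) : 0 < e ->
  `|a - c| < e -> `|b - d| < e -> `|(a - b) - (c - d)| < e + e.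
Proof.
move=> _ /absP[? ?] /absP[? ?]; apply/absP; split; lra.
Qed.

Lemma op_min (R : realType) (a b c d e : R) : 0 < e ->
  `|a - c| < e -> `|b - d| < e -> `|Num.min a b - Num.min c d| < e + e.
Proof.
move=> _ /absP[? ?] /absP[? ?]; apply/absP.
case: (minR a b) => -[-> ?]; case: (minR c d) => -[-> ?]; split; lra.
Qed.

Lemma op_max (R : realType) (a b c d e : R) : 0 < e ->
  `|a - c| < e -> `|b - d| < e -> `|Num.max a b - Num.max c d| < e + e.
Proof.
move=> _ /absP[? ?] /absP[? ?]; apply/absP.
case: (maxR a b) => -[-> ?]; case: (maxR c d) => -[-> ?]; split; lra.
Qed.
Definition JCh {R : realType} (V : R -> R -> R) (Ds Dr : set R) :=
  forall s0 r0, Ds s0 -> Dr r0 -> forall e : R, 0 < e -> exists2 d : R, 0 < d &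
    forall s r, Ds s -> Dr r -> `|s - s0| < d -> `|r - r0| < d -> `|V s r - V s0 r0| < e.

Definition Uh {R : realType} (V : R -> R -> R) (Ds Dr : set R) :=
  forall s0, Ds s0 -> forall K e : R, 0 < e -> exists2 d : R, 0 < d &
    forall s, Ds s -> `|s - s0| < d -> forall r, Dr r -> r <= K -> `|V s r - V s0 r| < e.

Lemma min4 {R : realType} {a b c d : R} : 0 < a -> 0 < b -> 0 < c -> 0 < d ->
  let m := Num.min (Num.min a b) (Num.min c d) in
  [/\ 0 < m, m <= a, m <= b, m <= c & m <= d].
Proof.
move=> a0 b0 c0 d0 m; rewrite /m.
by split; rewrite ?lt_min ?ge_min ?lexx ?orbT ?a0 ?b0 ?c0 ?d0.
Qed.

Lemma min3 {R : realType} {a b c : R} : 0 < a -> 0 < b -> 0 < c ->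
  let m := Num.min (Num.min a b) c in
  [/\ 0 < m, m <= a, m <= b & m <= c].
Proof.
move=> a0 b0 c0 m; rewrite /m.
by split; rewrite ?lt_min ?ge_min ?lexx ?orbT ?a0 ?b0 ?c0.
Qed.

Lemma min2 {R : realType} {a b : R} : 0 < a -> 0 < b ->
  let m := Num.min a b in [/\ 0 < m, m <= a & m <= b].
Proof.
move=> a0 b0 m; rewrite /m.
case: (minR a b) => -[-> ?]; split => //; lra.
Qed.

Lemma cts_V2 {R : realType} (D : set (R * R)) (V : R -> R -> R) (Ds Dr : set R)
  (s r : R * R -> R) p0 :
  D p0 -> JCh V Ds Dr -> (forall p, D p -> Ds (s p) /\ Dr (r p)) ->
  cts D s p0 -> cts D r p0 -> cts D (fun p => V (s p) (r p)) p0.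
Proof.
move=> Dp0 JC Hp cs cr e e0.
have [Ds0 Dr0] := Hp p0 Dp0.
have [d d0 Hd] := JC _ _ Ds0 Dr0 e e0.
have [d1 d10 H1] := cs d d0; have [d2 d20 H2] := cr d d0.
have [m0 m1 m2] := min2 d10 d20.
exists (Num.min d1 d2) => // p Dp l1 l2.
have [Dsp Drp] := Hp p Dp.
apply: Hd => //.
  by apply: H1 => //; apply: lt_le_trans; eassumption.
by apply: H2 => //; apply: lt_le_trans; eassumption.
Qed.

Lemma L1 {R : realType} {x y z e : R} : `|x - y| < e -> z <= y -> - e < x - z.
Proof. by move=> /absP[? ?] ?; lra. Qed.

Lemma L2 {R : realType} {x y z e : R} : `|x - y| < e -> z <= x -> z - y < e.
Proof. by move=> /absP[? ?] ?; lra. Qed.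

Lemma L3 {R : realType} {ap a0 c d d' : R} : ap <= c -> c < a0 -> `|ap - a0| < d -> d <= d' -> `|c - a0| < d'.
Proof. by move=> ? ? /absP[? ?] ?; apply/absP; split; lra. Qed.

Lemma L4 {R : realType} {bp b0 c d d' : R} : c <= bp -> b0 < c -> `|bp - b0| < d -> d <= d' -> `|c - b0| < d'.
Proof. by move=> ? ? /absP[? ?] ?; apply/absP; split; lra. Qed.

Lemma clamp_facts {R : realType} {a b a0 b0 r0 d : R} : a <= b -> a0 <= r0 -> r0 <= b0 ->
  `|a - a0| < d -> `|b - b0| < d ->
  [/\ a <= Num.max a (Num.min r0 b), Num.max a (Num.min r0 b) <= b &
  `|Num.max a (Num.min r0 b) - r0| < d].
Proof.
move=> ? ? ? /absP[? ?] /absP[? ?].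
case: (maxR a (Num.min r0 b)) => -[-> H];
  case: (minR r0 b) => -[E ?]; move: H; rewrite E => H; rewrite ?E;
  (split; [lra|lra|apply/absP; split; lra]).
Qed.

Lemma cts_inf {R : realType} (D : set (R * R)) (V : R -> R -> R) (Ds Dr : set R)
  (s a b : R * R -> R) p0 :
  D p0 ->
  (forall x y z, Dr x -> Dr y -> x <= z <= y -> Dr z) ->
  (forall t, Ds t -> {within Dr, continuous (V t)}) ->
  JCh V Ds Dr -> Uh V Ds Dr ->
  (forall p, D p -> [/\ Ds (s p), Dr (a p), Dr (b p) & a p <= b p]) ->
  cts D s p0 -> cts D a p0 -> cts D b p0 ->
  cts D (fun p => inf [set V (s p) r | r in `[a p, b p]]) p0.
Proof.
move=> Dp0 conv Vc JC U Hp cs ca cb e e0.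
have sub : forall x y, Dr x -> Dr y -> `[x, y] `<=` Dr.
  by move=> x y Dx Dy t /=; rewrite in_itv /= => Ht; apply: (conv x y).
have [Ds0 Da0 Db0 ab0] := Hp p0 Dp0.
have [r0 r0ab [g0E g0min]] :=
  inf_attained ab0 (continuous_subspaceW (sub _ _ Da0 Db0) (Vc _ Ds0)).
have Dr0 : Dr r0 by move: r0ab; rewrite in_itv /= => ?; apply: (conv (a p0) (b p0)).
have [d1 d10 H1] := JC _ _ Ds0 Dr0 e e0.
have [d2 d20 H2] := JC _ _ Ds0 Da0 e e0.
have [d3 d30 H3] := JC _ _ Ds0 Db0 e e0.
have [d4 d40 H4] := U _ Ds0 (b p0) e e0.
have [dl0 dl1 dl2 dl3 dl4] := min4 d10 d20 d30 d40.
set dl := Num.min _ _ in dl0 dl1 dl2 dl3 dl4.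
have [da da0 Ha] := ca dl dl0; have [db db0 Hb] := cb dl dl0.
have [ds ds0 Hs] := cs dl dl0.
have [m0 m1 m2 m3] := min3 da0 db0 ds0.
exists (Num.min (Num.min da db) ds) => // p Dp l1 l2.
have [Dsp Dap Dbp abp] := Hp p Dp.
have la : `|a p - a p0| < dl by apply: Ha => //; apply: lt_le_trans; eassumption.
have lb : `|b p - b p0| < dl by apply: Hb => //; apply: lt_le_trans; eassumption.
have ls : `|s p - s p0| < dl by apply: Hs => //; apply: lt_le_trans; eassumption.
have [c cab [gE gmin]] :=
  inf_attained abp (continuous_subspaceW (sub _ _ Dap Dbp) (Vc _ Dsp)).
rewrite gE g0E; apply/absP.
move: r0ab cab; rewrite !in_itv /= => /andP[r0a r0b] /andP[ca' cb'].
have Dc : Dr c by apply: (conv (a p) (b p)) => //; rewrite ca' cb'.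
split.
- case: (ltP c (a p0)) => cA.
    have a0in : a p0 \in `[a p0, b p0] by rewrite in_itv /= lexx ab0.
    apply: (L1 (H2 _ _ Dsp Dc (lt_le_trans ls dl2) (L3 ca' cA la dl2))).
    exact: g0min.
  case: (leP c (b p0)) => cB.
    have cin : c \in `[a p0, b p0] by rewrite in_itv /= cA cB.
    apply: (L1 (H4 _ Dsp (lt_le_trans ls dl4) c Dc cB)).
    exact: g0min.
  have b0in : b p0 \in `[a p0, b p0] by rewrite in_itv /= lexx ab0.
  apply: (L1 (H3 _ _ Dsp Dc (lt_le_trans ls dl3) (L4 cb' cB lb dl3))).
  exact: g0min.
- have [rl rr rc] := clamp_facts abp r0a r0b (lt_le_trans la dl1) (lt_le_trans lb dl1).
  set r := Num.max _ _ in rl rr rc.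
  have Dr' : Dr r by apply: (conv (a p) (b p)) => //; rewrite rl rr.
  have rin : r \in `[a p, b p] by rewrite in_itv /= rl rr.
  apply: (L2 (H1 _ _ Dsp Dr' (lt_le_trans ls dl1) rc)).
  exact: gmin.
Qed.


Lemma interval_sub {R : realType} {zeta x y : R} :
  x \in `[0, zeta] -> y \in `[0, zeta] ->
  `[Num.min x y, Num.max x y] `<=` `[0, zeta].
Proof.
rewrite !in_itv /= => /andP[? ?] /andP[? ?] t /=; rewrite !in_itv /= => /andP[].
case: (minR x y) => -[-> ?]; case: (maxR x y) => -[-> ?] ? ?; apply/andP; split; lra.
Qed.

Lemma mh_att {R : realType} {zeta : R} {h w s1 s2} : is_snake zeta h w ->
  s1 \in `[0, zeta] -> s2 \in `[0, zeta] ->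
  exists2 c, c \in `[Num.min s1 s2, Num.max s1 s2] &
    snake_mh h s1 s2 = h c /\ forall t, t \in `[Num.min s1 s2, Num.max s1 s2] -> h c <= h t.
Proof.
move=> [hc hp _ _] H1 H2.
apply: inf_attained.
  by case: (minR s1 s2) => -[-> ?]; case: (maxR s1 s2) => -[-> ?]; lra.
exact: continuous_subspaceW (interval_sub H1 H2) hc.
Qed.
Lemma between_split {R : realType} (x y z c : R) :
  Num.min x z <= c <= Num.max x z ->
  (Num.min x y <= c <= Num.max x y) || (Num.min y z <= c <= Num.max y z).
Proof.
rewrite !ge_min !le_max.
case: (leP x c) => ?; case: (leP z c) => ?; case: (leP y c) => ?; rewrite /= ?orbT ?orbF ?andbT //=.
all: try (apply/orP; right; apply/orP; lra).
all: case/orP => H; rewrite ?H ?orbT //; apply/orP; (left + right); lra.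
Qed.


Lemma mh_bounds {R : realType} {zeta : R} {h w s1 s2} : is_snake zeta h w ->
  s1 \in `[0, zeta] -> s2 \in `[0, zeta] ->
  [/\ 0 <= snake_mh h s1 s2, snake_mh h s1 s2 <= h s1 & snake_mh h s1 s2 <= h s2].
Proof.
move=> Hs H1 H2; have [c cI [-> cmin]] := mh_att Hs H1 H2.
have [_ hp _ _] := Hs.
split.
- by apply: hp; apply: (interval_sub H1 H2).
- apply: cmin; rewrite in_itv /=.
  by case: (minR s1 s2) => -[-> ?]; case: (maxR s1 s2) => -[-> ?]; apply/andP; split; lra.
- apply: cmin; rewrite in_itv /=.
  by case: (minR s1 s2) => -[-> ?]; case: (maxR s1 s2) => -[-> ?]; apply/andP; split; lra.
Qed.

Lemma mh_sym {R : realType} (h : R -> R) s1 s2 : snake_mh h s1 s2 = snake_mh h s2 s1.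
Proof. by rewrite /snake_mh minC maxC. Qed.

Lemma mh_ss {R : realType} {zeta : R} {h w s} : is_snake zeta h w ->
  s \in `[0, zeta] -> snake_mh h s s = h s.
Proof.
move=> Hs H; have [c cI [-> _]] := mh_att Hs H H.
move: cI; rewrite in_itv /= minxx maxxx => /andP[? ?].
by have -> : c = s by apply/eqP; rewrite eq_le; apply/andP; split.
Qed.

Lemma mh_tri {R : realType} {zeta : R} {h w s1 s2 s3} : is_snake zeta h w ->
  s1 \in `[0, zeta] -> s2 \in `[0, zeta] -> s3 \in `[0, zeta] ->
  Num.min (snake_mh h s1 s2) (snake_mh h s2 s3) <= snake_mh h s1 s3.
Proof.
move=> Hs H1 H2 H3.
have [c cI [-> _]] := mh_att Hs H1 H3.
have [c1 _ [-> m1]] := mh_att Hs H1 H2.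
have [c2 _ [-> m2]] := mh_att Hs H2 H3.
move: cI; rewrite in_itv /= => /(between_split _ s2) /orP[] HH; rewrite ge_min; apply/orP.
  by left; apply: m1; rewrite in_itv /= HH.
by right; apply: m2; rewrite in_itv /= HH.
Qed.

Lemma B_att {R : realType} {zeta : R} {h w s a} : is_snake zeta h w ->
  s \in `[0, zeta] -> 0 <= a -> a <= h s ->
  exists2 c, c \in `[a, h s] &
    inf [set w s r | r in `[a, h s]] = w s c /\ forall t, t \in `[a, h s] -> w s c <= w s t.
Proof.
move=> [_ _ _ [wc _ _ _]] Hs a0 ah.
apply: inf_attained => //.
apply: continuous_subspaceW (wc s Hs).
by move=> t /=; rewrite in_itv /= => /andP[? ?]; lra.
Qed.

Lemma B_lb {R : realType} {zeta : R} {h w s a t} : is_snake zeta h w ->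
  s \in `[0, zeta] -> 0 <= a -> a <= h s -> a <= t -> t <= h s ->
  inf [set w s r | r in `[a, h s]] <= w s t.
Proof.
move=> Hw Hs a0 ah ?; have [c _ [-> cm]] := B_att Hw Hs a0 ah.
by move=> ?; apply: cm; rewrite in_itv /=; apply/andP.
Qed.

Lemma B_ge {R : realType} {zeta : R} {h w s a} (L : R) : is_snake zeta h w ->
  s \in `[0, zeta] -> 0 <= a -> a <= h s ->
  (forall t, a <= t -> t <= h s -> L <= w s t) ->
  L <= inf [set w s r | r in `[a, h s]].
Proof.
move=> Hw Hs a0 ah H; have [c cI [-> _]] := B_att Hw Hs a0 ah.
by move: cI; rewrite in_itv /= => /andP[? ?]; apply: H.
Qed.

Lemma M_le_Z {R : realType} {zeta : R} {h w s1 s2} : is_snake zeta h w ->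
  s1 \in `[0, zeta] -> s2 \in `[0, zeta] ->
  snake_M h w s1 s2 <= w s1 (h s1).
Proof.
move=> Hw H1 H2; have [m0 m1 m2] := mh_bounds Hw H1 H2.
rewrite /snake_M ge_min; apply/orP; left.
exact: (B_lb Hw H1 m0 m1 m1 (lexx _)).
Qed.

Lemma M_sym {R : realType} (h : R -> R) w s1 s2 : snake_M h w s1 s2 = snake_M h w s2 s1.
Proof. by rewrite /snake_M mh_sym minC. Qed.

Lemma M_ss {R : realType} {zeta : R} {h w s} : is_snake zeta h w ->
  s \in `[0, zeta] -> snake_M h w s s = w s (h s).
Proof.
move=> Hw Hs; rewrite /snake_M minxx (mh_ss Hw Hs).
have [_ hp _ _] := Hw.
have [c cI [-> _]] := B_att Hw Hs (hp s Hs) (lexx (h s)).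
move: cI; rewrite in_itv /= => /andP[? ?].
by have -> : c = h s by apply/eqP; rewrite eq_le; apply/andP; split.
Qed.

Lemma M_ultra {R : realType} {zeta : R} {h w s1 s2 s3} : is_snake zeta h w ->
  s1 \in `[0, zeta] -> s2 \in `[0, zeta] -> s3 \in `[0, zeta] ->
  Num.min (snake_M h w s1 s2) (snake_M h w s2 s3) <= snake_M h w s1 s3.
Proof.
move=> Hw H1 H2 H3.
have [_ _ _ [_ _ _ wcons]] := Hw.
have tri := mh_tri Hw H1 H2 H3.
have [a0 a1 a2] := mh_bounds Hw H1 H2.
have [b0 b1 b2] := mh_bounds Hw H2 H3.
have [c0 c1 c2] := mh_bounds Hw H1 H3.
set m12 := snake_mh h s1 s2 in tri a0 a1 a2.
set m23 := snake_mh h s2 s3 in tri b0 b1 b2.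
set m13 := snake_mh h s1 s3 in tri c0 c1 c2.
have Le1 : forall L, L <= snake_M h w s1 s2 ->
   L <= inf [set w s1 r | r in `[m12, h s1]] /\ L <= inf [set w s2 r | r in `[m12, h s2]].
  by move=> L; rewrite /snake_M le_min => /andP.
have Le2 : forall L, L <= snake_M h w s2 s3 ->
   L <= inf [set w s2 r | r in `[m23, h s2]] /\ L <= inf [set w s3 r | r in `[m23, h s3]].
  by move=> L; rewrite /snake_M le_min => /andP.
set L := Num.min _ _.
have [L1 L2] := Le1 L (ltac:(rewrite /L ge_min lexx //)).
have [L3 L4] := Le2 L (ltac:(rewrite /L ge_min lexx orbT //)).
rewrite /snake_M -/m13 le_min; apply/andP; split.
- apply: (B_ge _ Hw H1 c0 c1) => t t1 t2.
  case: (leP m12 t) => tm.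
    by apply: le_trans L1 _; apply: (B_lb Hw H1 a0 a1).
  have -> : w s1 t = w s2 t by apply: wcons => //; apply/andP; split; lra.
  have mt : m23 <= t.
    by move: tri; case: (minR m12 m23) => -[-> ?] ?; lra.
  by apply: le_trans L3 _; apply: (B_lb Hw H2 b0 b1) => //; lra.
- apply: (B_ge _ Hw H3 c0 c2) => t t1 t2.
  case: (leP m23 t) => tm.
    by apply: le_trans L4 _; apply: (B_lb Hw H3 b0 b2).
  have -> : w s3 t = w s2 t by apply: wcons => //; rewrite mh_sym -/m23; apply/andP; split; lra.
  have mt : m12 <= t.
    by move: tri; case: (minR m12 m23) => -[-> ?] ?; lra.
  by apply: le_trans L2 _; apply: (B_lb Hw H2 a0 a2) => //; lra.
Qed.

Lemma tri3 {R : realType} {x y z : R} :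
  Num.min y z <= x -> Num.min x z <= y -> Num.min x y <= z ->
  (x = y /\ x <= z) \/ (x = z /\ x <= y) \/ (y = z /\ y <= x).
Proof.
rewrite !ge_min => /orP[h1|h1] /orP[h2|h2] /orP[h3|h3].
all: first [ left; split; [apply/eqP; rewrite eq_le; apply/andP; split|]; lra
           | right; left; split; [apply/eqP; rewrite eq_le; apply/andP; split|]; lra
           | right; right; split; [apply/eqP; rewrite eq_le; apply/andP; split|]; lra ].
Qed.

Lemma four_alg {R : realType} {m12 m13 m14 m23 m24 m34 : R} :
  (m12 = m23 /\ m12 <= m13) \/ (m12 = m13 /\ m12 <= m23) \/ (m23 = m13 /\ m23 <= m12) ->
  (m12 = m24 /\ m12 <= m14) \/ (m12 = m14 /\ m12 <= m24) \/ (m24 = m14 /\ m24 <= m12) ->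
  (m13 = m34 /\ m13 <= m14) \/ (m13 = m14 /\ m13 <= m34) \/ (m34 = m14 /\ m34 <= m13) ->
  (m23 = m34 /\ m23 <= m24) \/ (m23 = m24 /\ m23 <= m34) \/ (m34 = m24 /\ m34 <= m23) ->
  (m13 + m24 <= m12 + m34) || (m14 + m23 <= m12 + m34).
Proof.
move=> [[? ?]|[[? ?]|[? ?]]] [[? ?]|[[? ?]|[? ?]]] [[? ?]|[[? ?]|[? ?]]] [[? ?]|[[? ?]|[? ?]]].
all: apply/orP; first [left; lra | right; lra].
Qed.

Lemma cont_part (R : realType) (zeta : R) (h : R -> R) (w : R -> R -> R) :
  0 < zeta -> is_snake zeta h w ->
      {within [set p : R * R | p.1 \in `[0, zeta] /\ p.2 \in `[0, zeta]],
         continuous (fun p : R * R => snake_d h w p.1 p.2)}.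
Proof.
move=> z0 Hw.
have [hc hp [h0 hz] [wc wu wconst wcons]] := Hw.
set P := [set p : R * R | _].
pose Dz := [set x : R | x \in `[0, zeta]].
pose Dpos := [set x : R | 0 <= x].
have convz : forall x y z, Dz x -> Dz y -> x <= z <= y -> Dz z.
  by move=> x y z; rewrite /Dz /= !in_itv /= => /andP[? ?] /andP[? ?] /andP[? ?]; apply/andP; split; lra.
have convp : forall x y z, Dpos x -> Dpos y -> x <= z <= y -> Dpos z.
  by move=> x y z; rewrite /Dpos /= => ? ? /andP[? ?]; lra.
have JCh_h : JCh (fun _ r => h r) setT Dz.
  move=> s0 r0 _ Hr0 e e0; have [d d0 H] := @within_epsdelta _ _ _ _ hc Hr0 e e0.
  by exists d => // s r _ Hr _ rr; apply: H.
have Uh_h : Uh (fun _ r => h r) setT Dz.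
  by move=> s0 _ K e e0; exists 1 => // s _ _ r _ _; rewrite subrr normr0.
have JCh_w : JCh w Dz Dpos.
  move=> s0 r0 Hs0 Hr0 e e0.
  have e20 : 0 < e / 2 by rewrite divr_gt0.
  have [da da0 Ha] := wu s0 Hs0 (r0 + 1) _ e20.
  have [db db0 Hb] := @within_epsdelta _ _ _ _ (wc s0 Hs0) Hr0 _ e20.
  have [m0 m1 m2 m3] := min3 da0 db0 (ltr01 : (0 : R) < 1).
  exists (Num.min (Num.min da db) 1) => // s r Hs Hr sd rd.
  have h1 : `|w s r - w s0 r| < e / 2.
    apply: Ha => //; first exact: lt_le_trans sd m1.
    apply/andP; split => //; move: (lt_le_trans rd m3) => /absP[? ?]; lra.
  have h2 : `|w s0 r - w s0 r0| < e / 2 by apply: Hb => //; exact: lt_le_trans rd m2.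
  move: h1 h2 => /absP[? ?] /absP[? ?]; apply/absP; split; lra.
have Uh_w : Uh w Dz Dpos.
  move=> s0 Hs0 K e e0; have [d d0 H] := wu s0 Hs0 K e e0.
  by exists d => // s Hs sd r Hr rK; apply: H => //; apply/andP.
apply: prod_epsdelta => p0 Pp0.
suff : cts P (fun p => snake_d h w p.1 p.2) p0 by [].
have P1 : forall p, P p -> Dz p.1 by move=> p [].
have P2 : forall p, P p -> Dz p.2 by move=> p [].
have c1 : cts P (fun p => p.1) p0 := cts_fst _ P p0.
have c2 : cts P (fun p => p.2) p0 := cts_snd _ P p0.
have ch1 : cts P (fun p => h p.1) p0.
  apply: (@cts_V2 R P (fun _ r => h r) setT Dz (fun p => p.1) (fun p => p.1) p0 Pp0 JCh_h) => //.
  by move=> p Pp; split => //; apply: P1.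
have ch2 : cts P (fun p => h p.2) p0.
  apply: (@cts_V2 R P (fun _ r => h r) setT Dz (fun p => p.2) (fun p => p.2) p0 Pp0 JCh_h) => //.
  by move=> p Pp; split => //; apply: P2.
have cZ1 : cts P (fun p => w p.1 (h p.1)) p0.
  apply: (@cts_V2 R P w Dz Dpos (fun p => p.1) (fun p => h p.1) p0 Pp0 JCh_w) => //.
  by move=> p Pp; split; [exact: P1 | rewrite /Dpos /=; exact: hp (P1 p Pp)].
have cZ2 : cts P (fun p => w p.2 (h p.2)) p0.
  apply: (@cts_V2 R P w Dz Dpos (fun p => p.2) (fun p => h p.2) p0 Pp0 JCh_w) => //.
  by move=> p Pp; split; [exact: P2 | rewrite /Dpos /=; exact: hp (P2 p Pp)].
have cmin := @cts_bin R P _ _ (fun x y => Num.min x y) p0 (@op_min R) c1 c2.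
have cmax := @cts_bin R P _ _ (fun x y => Num.max x y) p0 (@op_max R) c1 c2.
have cmh : cts P (fun p => snake_mh h p.1 p.2) p0.
  apply: (@cts_inf R P (fun _ r => h r) setT Dz (fun p => p.1)
    (fun p => Num.min p.1 p.2) (fun p => Num.max p.1 p.2) p0 Pp0 convz (fun _ _ => hc) JCh_h Uh_h) => //.
  move=> p Pp; split => //.
  - by case: (minR p.1 p.2) => -[-> _]; [apply: P1 | apply: P2].
  - by case: (maxR p.1 p.2) => -[-> _]; [apply: P2 | apply: P1].
  - by case: (minR p.1 p.2) => -[-> ?]; case: (maxR p.1 p.2) => -[-> ?]; lra.
have cB1 : cts P (fun p => inf [set w p.1 r | r in `[snake_mh h p.1 p.2, h p.1]]) p0.
  apply: (@cts_inf R P w Dz Dpos (fun p => p.1) (fun p => snake_mh h p.1 p.2) (fun p => h p.1)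
     p0 Pp0 convp wc JCh_w Uh_w) => //.
  move=> p Pp; have [m0 m1 m2] := mh_bounds Hw (P1 p Pp) (P2 p Pp).
  by split => //; [exact: P1 | rewrite /Dpos /=; exact: hp (P1 p Pp)].
have cB2 : cts P (fun p => inf [set w p.2 r | r in `[snake_mh h p.1 p.2, h p.2]]) p0.
  apply: (@cts_inf R P w Dz Dpos (fun p => p.2) (fun p => snake_mh h p.1 p.2) (fun p => h p.2)
     p0 Pp0 convp wc JCh_w Uh_w) => //.
  move=> p Pp; have [m0 m1 m2] := mh_bounds Hw (P1 p Pp) (P2 p Pp).
  by split => //; [exact: P2 | rewrite /Dpos /=; exact: hp (P2 p Pp)].
have cM := @cts_bin R P _ _ (fun x y => Num.min x y) p0 (@op_min R) cB1 cB2.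
have cMM := @cts_bin R P _ _ (fun x y => x + y) p0 (@op_add R) cM cM.
have cZZ := @cts_bin R P _ _ (fun x y => x + y) p0 (@op_add R) cZ1 cZ2.
have cd := @cts_bin R P _ _ (fun x y => x - y) p0 (@op_sub R) cZZ cMM.
apply: cts_ext cd => p /=.
rewrite /snake_d /snake_M; lra.
Qed.

Theorem lemma4p22 (R : realType) (zeta : R) (h : R -> R) (w : R -> R -> R) :
  0 < zeta -> is_snake zeta h w ->
  [/\ (* continuity on [0,zeta]^2 *)
      {within [set p : R * R | p.1 \in `[0, zeta] /\ p.2 \in `[0, zeta]],
         continuous (fun p : R * R => snake_d h w p.1 p.2)},
      (* pseudo-metric *)
      (forall s, s \in `[0, zeta] -> snake_d h w s s = 0),
      (forall s1 s2, s1 \in `[0, zeta] -> s2 \in `[0, zeta] ->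
         0 <= snake_d h w s1 s2 /\ snake_d h w s1 s2 = snake_d h w s2 s1),
      (forall s1 s2 s3, s1 \in `[0, zeta] -> s2 \in `[0, zeta] -> s3 \in `[0, zeta] ->
         snake_d h w s1 s3 <= snake_d h w s1 s2 + snake_d h w s2 s3)
    & (* four points inequality *)
      (forall s1 s2 s3 s4, s1 \in `[0, zeta] -> s2 \in `[0, zeta] ->
         s3 \in `[0, zeta] -> s4 \in `[0, zeta] ->
         snake_d h w s1 s2 + snake_d h w s3 s4 <=
         Num.max (snake_d h w s1 s3 + snake_d h w s2 s4)
                 (snake_d h w s1 s4 + snake_d h w s2 s3))].
Proof.
move=> z0 Hw.
have [hc hp [h0 hz] [wc wu wconst wcons]] := Hw.
have U3 : forall a b c, a \in `[0, zeta] -> b \in `[0, zeta] -> c \in `[0, zeta] ->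
  (snake_M h w a b = snake_M h w b c /\ snake_M h w a b <= snake_M h w a c) \/
  (snake_M h w a b = snake_M h w a c /\ snake_M h w a b <= snake_M h w b c) \/
  (snake_M h w b c = snake_M h w a c /\ snake_M h w b c <= snake_M h w a b).
  move=> a b c Ha Hb Hc; apply: tri3.
  - by have := M_ultra Hw Ha Hc Hb; rewrite (M_sym h w c b) minC.
  - by have := M_ultra Hw Hb Ha Hc; rewrite (M_sym h w b a).
  - exact: M_ultra Hw Ha Hb Hc.
split.
- exact: cont_part z0 Hw.
- by move=> s Hs; rewrite /snake_d (M_ss Hw Hs); lra.
- move=> s1 s2 H1 H2; split.
    have := M_le_Z Hw H1 H2; have := M_le_Z Hw H2 H1; rewrite (M_sym h w s2 s1).
    by rewrite /snake_d => ? ?; lra.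
  by rewrite /snake_d (M_sym h w s2 s1); lra.
- move=> s1 s2 s3 H1 H2 H3.
  have := M_ultra Hw H1 H2 H3.
  have := M_le_Z Hw H2 H1; have := M_le_Z Hw H2 H3; rewrite (M_sym h w s2 s1).
  rewrite /snake_d => ? ?.
  by case: (minR (snake_M h w s1 s2) (snake_M h w s2 s3)) => -[-> ?] ?; lra.
- move=> s1 s2 s3 s4 H1 H2 H3 H4.
  have := four_alg (U3 _ _ _ H1 H2 H3) (U3 _ _ _ H1 H2 H4) (U3 _ _ _ H1 H3 H4) (U3 _ _ _ H2 H3 H4).
  rewrite /snake_d le_max => /orP[?|?]; apply/orP; [left|right]; lra.
Qed.
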